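(* Let $\lambda\in Y^{++}$, $\nu\in Y^+$ and $u\in W^v$. Then the set $\{\mu\in W^v\lambda:\nu\in R_u(\mu)\}$ is finite.
   Context: $I$ finite, $A$ a generalized Cartan matrix, $Y$ a free $\mathbb Z$-module of finite rank with free family $(\alpha_i^\vee)_{i\in I}$ and $\alpha_i\in\mathrm{Hom}(Y,\mathbb Z)$ with $\alpha_j(\alpha_i^\vee)=a_{i,j}$; $\mathbb A=Y\otimes\mathbb R$; $r_i(v)=v-\alpha_i(v)\alpha_i^\vee$; $W^v=\langle r_i\rangle$; $Q^\vee=\bigoplus\mathbb Z\alpha_i^\vee$; $C^v_f=\{\alpha_i>0\ \forall i\}$, $\mathcal T=\bigcup_w w\overline{C^v_f}$, $Y^+=Y\cap\mathcal T$, $Y^{++}=Y\cap\overline{C^v_f}$. For $E\subset Y$, $R_i(E)=\mathrm{conv}(E\cup r_i(E))\cap(E+Q^\vee)$; for $w\in W^v$, $\mu\in Y$, $R_w(\mu)=\bigcup R_{i_1}(\cdots R_{i_k}(\{\mu\})\cdots)$ over all reduced expressions $w=r_{i_1}\cdots r_{i_k}$. *)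

(* Defs.v *)
From HB Require Import structures.
From mathcomp Require Import all_boot all_order all_algebra.
Set Implicit Arguments. Unset Strict Implicit. Unset Printing Implicit Defensive.
Import Order.TTheory GRing.Theory Num.Theory.
Local Open Scope ring_scope.

(* Y = Z^n realised as 'rV[int]_n; Hom(Y,Z) realised as 'rV[int]_n via the
   standard pairing; A = Y (x) R realised as 'rV[R]_n for a real field R. *)

Definition dotv (R : comNzRingType) (n : nat) (x y : 'rV[R]_n) : R :=
  \sum_(k < n) x 0 k * y 0 k.

Definition emb (R : realFieldType) (n : nat) (y : 'rV[int]_n) : 'rV[R]_n :=
  map_mx (fun z : int => z%:~R) y.

Definition is_GCM (I : finType) (a : I -> I -> int) : Prop :=
  (forall i, a i i = 2) /\
  (forall i j, i != j -> a i j <= 0) /\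
  (forall i j, a i j = 0 <-> a j i = 0).

Definition free_family (I : finType) (n : nat) (av : I -> 'rV[int]_n) : Prop :=
  forall c : I -> int, \sum_i c i *: av i = 0 -> forall i, c i = 0.

Section KM.
Variables (R : realFieldType) (I : finType) (n : nat) (al av : I -> 'rV[int]_n).

Definition rY (i : I) (y : 'rV[int]_n) : 'rV[int]_n :=
  y - dotv (al i) y *: av i.
Definition rA (i : I) (v : 'rV[R]_n) : 'rV[R]_n :=
  v - dotv (emb R (al i)) v *: emb R (av i).

(* word [:: i1; ...; ik] acts as r_{i1} o ... o r_{ik} *)
Definition actY (s : seq I) (y : 'rV[int]_n) := foldr rY y s.
Definition actA (s : seq I) (v : 'rV[R]_n) := foldr rA v s.

(* s is a reduced expression of the element of W^v (in GL(A)) represented by s0 *)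
Definition reduced_expr (s s0 : seq I) : Prop :=
  (forall v, actA s v = actA s0 v) /\
  (forall s', (forall v, actA s' v = actA s0 v) -> (size s <= size s')%N).

Definition inQv (y : 'rV[int]_n) : Prop :=
  exists c : I -> int, y = \sum_i c i *: av i.

Definition conv (S : 'rV[R]_n -> Prop) (x : 'rV[R]_n) : Prop :=
  exists (m : nat) (p : 'I_m -> 'rV[R]_n) (w : 'I_m -> R),
    (forall k, S (p k)) /\ (forall k, 0 <= w k) /\
    \sum_k w k = 1 /\ x = \sum_k w k *: p k.

Definition Ri (i : I) (E : 'rV[int]_n -> Prop) (y : 'rV[int]_n) : Prop :=
  conv (fun x => exists e, (E e \/ exists e', E e' /\ e = rY i e') /\ x = emb R e)
       (emb R y) /\
  exists e q, E e /\ inQv q /\ y = e + q.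

Definition Rword (s : seq I) (E : 'rV[int]_n -> Prop) := foldr Ri E s.

Definition Rw (s0 : seq I) (mu y : 'rV[int]_n) : Prop :=
  exists s, reduced_expr s s0 /\ Rword s (fun z => z = mu) y.

(* Y^{++} = Y n closure(C^v_f) *)
Definition Ypp (y : 'rV[int]_n) : Prop := forall i, 0 <= dotv (al i) y.

(* Y^+ = Y n Tits cone *)
Definition Yp (y : 'rV[int]_n) : Prop :=
  exists (s : seq I) (v : 'rV[R]_n),
    (forall i, 0 <= dotv (emb R (al i)) v) /\ emb R y = actA s v.

Definition in_Worbit (lam mu : 'rV[int]_n) : Prop :=
  exists s : seq I, mu = actY s lam.

End KM.

(* Main.v *)
Require Import Defs.
From HB Require Import structures.
From mathcomp Require Import all_boot all_order all_algebra.
From mathcomp Require Import zify ring lra.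
From Stdlib Require Import Classical.
Import Order.TTheory GRing.Theory Num.Theory.
Local Open Scope ring_scope.
Set Implicit Arguments. Unset Strict Implicit. Unset Printing Implicit Defensive.

Section Basic.
Variables (R : realFieldType) (I : finType) (n : nat) (al av : I -> 'rV[int]_n).

Lemma dotvDr (K : comNzRingType) (x y z : 'rV[K]_n) : dotv x (y + z) = dotv x y + dotv x z.
Proof. rewrite /dotv -big_split; apply: eq_bigr => k _; rewrite mxE mulrDr. done. Qed.
Lemma dotvZr (K : comNzRingType) (x y : 'rV[K]_n) c : dotv x (c *: y) = c * dotv x y.
Proof. rewrite /dotv mulr_sumr; apply: eq_bigr => k _; rewrite mxE; ring. Qed.
Lemma dotvNr (K : comNzRingType) (x y : 'rV[K]_n) : dotv x (- y) = - dotv x y.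
Proof. by rewrite -scaleN1r dotvZr mulN1r. Qed.
Lemma dotvBr (K : comNzRingType) (x y z : 'rV[K]_n) : dotv x (y - z) = dotv x y - dotv x z.
Proof. by rewrite dotvDr dotvNr. Qed.
Lemma dotv0r (K : comNzRingType) (x : 'rV[K]_n) : dotv x 0 = 0.
Proof. by rewrite /dotv big1 // => k _; rewrite mxE mulr0. Qed.
Lemma dotv_sumr (K : comNzRingType) (x : 'rV[K]_n) (J : Type) (r : seq J) (F : J -> 'rV[K]_n) :
  dotv x (\sum_(j <- r) F j) = \sum_(j <- r) dotv x (F j).
Proof.
elim: r => [|j r IH]; first by rewrite !big_nil dotv0r.
by rewrite !big_cons dotvDr IH.
Qed.

Lemma embD (y z : 'rV[int]_n) : emb R (y + z) = emb R y + emb R z.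
Proof. by apply/rowP => k; rewrite !mxE rmorphD. Qed.
Lemma embN (y : 'rV[int]_n) : emb R (- y) = - emb R y.
Proof. by apply/rowP => k; rewrite !mxE rmorphN. Qed.
Lemma embB (y z : 'rV[int]_n) : emb R (y - z) = emb R y - emb R z.
Proof. by rewrite embD embN. Qed.
Lemma embZ (c : int) (y : 'rV[int]_n) : emb R (c *: y) = c%:~R *: emb R y.
Proof. by apply/rowP => k; rewrite !mxE rmorphM. Qed.
Lemma emb0 : emb R (0 : 'rV[int]_n) = 0.
Proof. by apply/rowP => k; rewrite !mxE. Qed.
Lemma emb_sum (J : Type) (r : seq J) (F : J -> 'rV[int]_n) :
  emb R (\sum_(j <- r) F j) = \sum_(j <- r) emb R (F j).
Proof.
elim: r => [|j r IH]; first by rewrite !big_nil emb0.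
by rewrite !big_cons embD IH.
Qed.
Lemma emb_inj : injective (@emb R n).
Proof.
move=> y z /rowP H; apply/rowP => k; move: (H k); rewrite !mxE.
exact: intr_inj.
Qed.
Lemma dotv_emb (x y : 'rV[int]_n) : dotv (emb R x) (emb R y) = (dotv x y)%:~R.
Proof. rewrite /dotv rmorph_sum; apply: eq_bigr => k _; by rewrite !mxE rmorphM. Qed.

Lemma rA_emb i y : rA al av i (emb R y) = emb R (rY al av i y).
Proof. by rewrite /rA /rY embB embZ dotv_emb. Qed.
Lemma actA_emb s y : actA al av s (emb R y) = emb R (actY al av s y).
Proof. elim: s => [|i s IH] //=; by rewrite IH rA_emb. Qed.

Lemma rYD i y z : rY al av i (y + z) = rY al av i y + rY al av i z.
Proof. rewrite /rY dotvDr; apply/rowP => k; rewrite !mxE; ring. Qed.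
Lemma rYZ i c y : rY al av i (c *: y) = c *: rY al av i y.
Proof. by rewrite /rY dotvZr scalerBr scalerA. Qed.
Lemma rAD i y z : rA (R:=R) al av i (y + z) = rA al av i y + rA al av i z.
Proof. rewrite /rA dotvDr; apply/rowP => k; rewrite !mxE; ring. Qed.
Lemma rAZ i (c : R) y : rA al av i (c *: y) = c *: rA al av i y.
Proof. by rewrite /rA dotvZr scalerBr scalerA. Qed.
Lemma actYD s y z : actY al av s (y + z) = actY al av s y + actY al av s z.
Proof. elim: s => [|i s IH] //=; by rewrite IH rYD. Qed.
Lemma actYZ s c y : actY al av s (c *: y) = c *: actY al av s y.
Proof. elim: s => [|i s IH] //=; by rewrite IH rYZ. Qed.
Lemma actAD s y z : actA (R:=R) al av s (y + z) = actA al av s y + actA al av s z.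
Proof. elim: s => [|i s IH] //=; by rewrite IH rAD. Qed.
Lemma actAZ s (c : R) y : actA al av s (c *: y) = c *: actA al av s y.
Proof. elim: s => [|i s IH] //=; by rewrite IH rAZ. Qed.
Lemma actA0 s : actA al av s (0 : 'rV[R]_n) = 0.
Proof. elim: s => //= i s ->; by rewrite /rA dotv0r scale0r subr0. Qed.
Lemma actA_sum s (J : Type) (r : seq J) (F : J -> 'rV[R]_n) :
  actA al av s (\sum_(j <- r) F j) = \sum_(j <- r) actA al av s (F j).
Proof.
elim: r => [|j r IH]; first by rewrite !big_nil actA0.
by rewrite !big_cons actAD IH.
Qed.
Lemma actY_cat s t y : actY al av (s ++ t) y = actY al av s (actY al av t y).
Proof. by rewrite /actY foldr_cat. Qed.
Lemma actA_cat s t y : actA (R:=R) al av (s ++ t) y = actA al av s (actA al av t y).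
Proof. by rewrite /actA foldr_cat. Qed.

End Basic.

Section W.
Variables (R : realFieldType) (I : finType) (n : nat) (a : I -> I -> int)
  (al av : I -> 'rV[int]_n).
Hypothesis GCM : is_GCM a.
Hypothesis hA : forall i j, dotv (al j) (av i) = a i j.

Lemma a_ii i : a i i = 2. Proof. by case: GCM. Qed.

Lemma rY_inv i y : rY al av i (rY al av i y) = y.
Proof.
rewrite {1}/rY /rY dotvBr dotvZr hA a_ii; apply/rowP => k; rewrite !mxE; ring.
Qed.
Lemma rA_inv i (v : 'rV[R]_n) : rA al av i (rA al av i v) = v.
Proof.
rewrite {1}/rA /rA dotvBr dotvZr dotv_emb hA a_ii; apply/rowP => k; rewrite !mxE; ring.
Qed.

Definition eqW (s t : seq I) := forall v : 'rV[R]_n, actA al av s v = actA al av t v.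
Definition red (w : seq I) := forall t, eqW t w -> (size w <= size t)%N.

Lemma eqW_Y s t y : eqW s t -> actY al av s y = actY al av t y.
Proof. move=> H; apply: (@emb_inj R); by rewrite -!actA_emb H. Qed.
Lemma eqW_refl s : eqW s s. Proof. by []. Qed.
Lemma eqW_sym s t : eqW s t -> eqW t s. Proof. by move=> H v; rewrite H. Qed.
Lemma eqW_trans s t u : eqW s t -> eqW t u -> eqW s u.
Proof. by move=> H1 H2 v; rewrite H1 H2. Qed.
Lemma eqW_catl x s t : eqW s t -> eqW (x ++ s) (x ++ t).
Proof. by move=> H v; rewrite !actA_cat H. Qed.
Lemma eqW_catr x s t : eqW s t -> eqW (s ++ x) (t ++ x).
Proof. by move=> H v; rewrite !actA_cat H. Qed.
Lemma eqW_ii x i z : eqW (x ++ [:: i; i] ++ z) (x ++ z).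
Proof. by move=> v; rewrite !actA_cat /= rA_inv. Qed.
Lemma eqW_dup p x : eqW (rcons (rcons p x) x) p.
Proof.
move=> v; rewrite -!cats1 -catA /= -[p in RHS]cats0.
by have := eqW_ii p x [::] v; rewrite /= => ->.
Qed.

Lemma red_rcons u z : red (rcons u z) -> red u.
Proof.
move=> H t Ht; have : eqW (rcons t z) (rcons u z).
  by rewrite -!cats1; apply: eqW_catr.
by move/H; rewrite !size_rcons.
Qed.

Lemma red_exists s : exists t, eqW t s /\ red t.
Proof.
move: {2}(size s) (leqnn (size s)) => k; elim: k s => [|k IH] s Hs.
  exists s; split => // t _; by move: Hs; case: s.
case: (classic (red s)) => Hr; first by exists s.
have [t Ht] := not_all_ex_not _ _ Hr.
have [Ht1 Ht2] := imply_to_and _ _ Ht.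
have Hlt : (size t < size s)%N by rewrite ltnNge; apply/negP.
have [t' [Ht' Hr']] := IH t (leq_trans Hlt Hs).
exists t'; split => //; exact: eqW_trans Ht' Ht1.
Qed.

End W.

Definition F0 (bb cc : int) (b : bool) (p : int * int) : int * int :=
  if b then (p.1, - p.2 - cc * p.1) else (- p.1 - bb * p.2, p.2).
Fixpoint G0 bb cc (k : nat) (b : bool) (p : int * int) : int * int :=
  if k is k'.+1 then G0 bb cc k' (~~ b) (F0 bb cc b p) else p.

Definition FA0 (R : realFieldType) (bb cc : int) (p0 q0 : R) (b : bool) (p : R * R) : R * R :=
  if b then (p.1, - p.2 - q0 - cc%:~R * p.1) else (- p.1 - p0 - bb%:~R * p.2, p.2).
Fixpoint GA0 (R : realFieldType) bb cc p0 q0 (k : nat) (b : bool) (p : R * R) : R * R :=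
  if k is k'.+1 then GA0 bb cc p0 q0 k' (~~ b) (FA0 bb cc p0 q0 b p) else p.

Definition Inv (bb cc : int) (b : bool) (p : int * int) : Prop :=
  0 <= p.1 /\ 0 <= p.2 /\ (if b then 2 * p.2 <= (- cc) * p.1 else 2 * p.1 <= (- bb) * p.2).

Lemma Inv_step bb cc b p : bb <= 0 -> cc <= 0 -> 4 <= bb * cc ->
  Inv bb cc b p -> Inv bb cc (~~ b) (F0 bb cc b p).
Proof.
case: p => x y; rewrite /Inv /F0; case: b => /= Hb Hc H4 [H1 [H2 H3]]; split; nia.
Qed.

Lemma G0_pos_inf bb cc k b p : bb <= 0 -> cc <= 0 -> 4 <= bb * cc ->
  Inv bb cc b p -> 0 <= (G0 bb cc k b p).1 /\ 0 <= (G0 bb cc k b p).2.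
Proof.
move=> Hb Hc H4; elim: k b p => [|k IH] b p /=.
  by move=> [H1 [H2 _]].
move=> Hi; apply: IH; exact: Inv_step.
Qed.

Lemma cases_fin (bb cc : int) : bb <= 0 -> cc <= 0 -> (bb = 0 <-> cc = 0) -> bb * cc < 4 ->
  (bb = 0 /\ cc = 0) \/ (bb = -1 /\ cc = -1) \/ ((bb = -1 /\ cc = -2) \/ (bb = -2 /\ cc = -1))
      \/ ((bb = -1 /\ cc = -3) \/ (bb = -3 /\ cc = -1)).
Proof.
move=> Hb Hc [H1 H2] H4.
have [eb|bn] := eqVneq bb 0; first by left; split => //; exact: H1 eb.
have cn : cc != 0 by apply/eqP => /H2; apply/eqP.
have hb : bb <= -1 by lia.
have hc : cc <= -1 by lia.
have hb3 : -3 <= bb by nia.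
have hc3 : -3 <= cc by nia.
have : (bb == -1) || (bb == -2) || (bb == -3) by lia.
have : (cc == -1) || (cc == -2) || (cc == -3) by lia.
case/orP => [/orP [] | ] /eqP ec ; case/orP => [/orP [] | ] /eqP eb ; rewrite eb ec in H4 *; lia.
Qed.
Lemma fin_pos0 K : (K < 2)%N -> 0 <= (G0 (0) (0) K true (1,0)).1 /\ 0 <= (G0 (0) (0) K true (1,0)).2.
Proof. do 2 (case: K => [|K]; first by rewrite /=; lia). done. Qed.
Lemma fin_br0 (R : realFieldType) (p q : R) : GA0 (0) (0) p q 2 false (0,0) = GA0 (0) (0) p q 2 true (0,0).
Proof. rewrite /= /FA0 /=. congr pair; ring. Qed.

Lemma fin_pos1 K : (K < 3)%N -> 0 <= (G0 (-1) (-1) K true (1,0)).1 /\ 0 <= (G0 (-1) (-1) K true (1,0)).2.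
Proof. do 3 (case: K => [|K]; first by rewrite /=; lia). done. Qed.
Lemma fin_br1 (R : realFieldType) (p q : R) : GA0 (-1) (-1) p q 3 false (0,0) = GA0 (-1) (-1) p q 3 true (0,0).
Proof. rewrite /= /FA0 /=. congr pair; ring. Qed.

Lemma fin_pos2 K : (K < 4)%N -> 0 <= (G0 (-1) (-2) K true (1,0)).1 /\ 0 <= (G0 (-1) (-2) K true (1,0)).2.
Proof. do 4 (case: K => [|K]; first by rewrite /=; lia). done. Qed.
Lemma fin_br2 (R : realFieldType) (p q : R) : GA0 (-1) (-2) p q 4 false (0,0) = GA0 (-1) (-2) p q 4 true (0,0).
Proof. rewrite /= /FA0 /=. congr pair; ring. Qed.

Lemma fin_pos3 K : (K < 4)%N -> 0 <= (G0 (-2) (-1) K true (1,0)).1 /\ 0 <= (G0 (-2) (-1) K true (1,0)).2.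
Proof. do 4 (case: K => [|K]; first by rewrite /=; lia). done. Qed.
Lemma fin_br3 (R : realFieldType) (p q : R) : GA0 (-2) (-1) p q 4 false (0,0) = GA0 (-2) (-1) p q 4 true (0,0).
Proof. rewrite /= /FA0 /=. congr pair; ring. Qed.

Lemma fin_pos4 K : (K < 6)%N -> 0 <= (G0 (-1) (-3) K true (1,0)).1 /\ 0 <= (G0 (-1) (-3) K true (1,0)).2.
Proof. do 6 (case: K => [|K]; first by rewrite /=; lia). done. Qed.
Lemma fin_br4 (R : realFieldType) (p q : R) : GA0 (-1) (-3) p q 6 false (0,0) = GA0 (-1) (-3) p q 6 true (0,0).
Proof. rewrite /= /FA0 /=. congr pair; ring. Qed.

Lemma fin_pos5 K : (K < 6)%N -> 0 <= (G0 (-3) (-1) K true (1,0)).1 /\ 0 <= (G0 (-3) (-1) K true (1,0)).2.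
Proof. do 6 (case: K => [|K]; first by rewrite /=; lia). done. Qed.
Lemma fin_br5 (R : realFieldType) (p q : R) : GA0 (-3) (-1) p q 6 false (0,0) = GA0 (-3) (-1) p q 6 true (0,0).
Proof. rewrite /= /FA0 /=. congr pair; ring. Qed.

Definition fin_ok (bb cc : int) (m : nat) : Prop :=
  (0 < m)%N /\ (forall K, (K < m)%N -> 0 <= (G0 bb cc K true (1,0)).1 /\ 0 <= (G0 bb cc K true (1,0)).2) /\
  (forall (R : realFieldType) (p q : R), GA0 bb cc p q m false (0,0) = GA0 bb cc p q m true (0,0)).

Lemma fin_data (bb cc : int) : bb <= 0 -> cc <= 0 -> (bb = 0 <-> cc = 0) -> bb * cc < 4 ->
  exists m, fin_ok bb cc m.
Proof.
move=> H1 H2 H3 H4.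
case: (cases_fin H1 H2 H3 H4) => [[-> ->]|[[-> ->]|[[[-> ->]|[-> ->]]|[[-> ->]|[-> ->]]]]].

- by exists 2; split; [|split; [exact: fin_pos0 | exact: fin_br0]].

- by exists 3; split; [|split; [exact: fin_pos1 | exact: fin_br1]].

- by exists 4; split; [|split; [exact: fin_pos2 | exact: fin_br2]].

- by exists 4; split; [|split; [exact: fin_pos3 | exact: fin_br3]].

- by exists 6; split; [|split; [exact: fin_pos4 | exact: fin_br4]].

- by exists 6; split; [|split; [exact: fin_pos5 | exact: fin_br5]].

Qed.

Fixpoint alt (I : Type) (k : nat) (x y : I) : seq I :=
  if k is k'.+1 then rcons (alt k' y x) x else [::].

Lemma size_alt (I : Type) k (x y : I) : size (alt k x y) = k.
Proof. by elim: k x y => //= k IH x y; rewrite size_rcons IH. Qed.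

Lemma alt_S (I : Type) k (x y : I) : alt k.+1 x y = (if odd k then y else x) :: alt k x y.
Proof.
elim: k x y => [|k IH] x y //.
change (alt k.+2 x y) with (rcons (alt k.+1 y x) x).
rewrite IH rcons_cons /=; by case: (odd k).
Qed.

Lemma alt_split (I : Type) j k (x y : I) :
  alt (j + k) x y = alt j (if odd k then y else x) (if odd k then x else y) ++ alt k x y.
Proof.
elim: k x y => [|k IH] x y; first by rewrite addn0 cats0.
rewrite addnS /= IH rcons_cat /=; by case: (odd k).
Qed.

Section Dihedral.
Variables (R : realFieldType) (I : finType) (n : nat) (a : I -> I -> int)
  (al av : I -> 'rV[int]_n).
Hypothesis GCM : is_GCM a.
Hypothesis hA : forall i j, dotv (al j) (av i) = a i j.
Variables (s s' : I).
Hypothesis ss' : s != s'.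

Let b' := a s' s.
Let c' := a s s'.

Lemma rY_st_s x y :
  rY al av s (x *: av s + y *: av s') = (- x - b' * y) *: av s + y *: av s'.
Proof.
rewrite /rY dotvDr !dotvZr !hA (a_ii GCM); apply/rowP => k; rewrite !mxE /b'; ring.
Qed.
Lemma rY_st_s' x y :
  rY al av s' (x *: av s + y *: av s') = x *: av s + (- y - c' * x) *: av s'.
Proof.
rewrite /rY dotvDr !dotvZr !hA (a_ii GCM); apply/rowP => k; rewrite !mxE /c'; ring.
Qed.


Lemma actY_alt k b p :
  actY al av (alt k (if b then s' else s) (if b then s else s')) (p.1 *: av s + p.2 *: av s')
  = (G0 b' c' k b p).1 *: av s + (G0 b' c' k b p).2 *: av s'.
Proof.
elim: k b p => [|k IH] b p //=.
rewrite -cats1 actY_cat /=.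
case: b => /=.
- by rewrite rY_st_s' (IH false (p.1, - p.2 - c' * p.1)).
- by rewrite rY_st_s (IH true (- p.1 - b' * p.2, p.2)).
Qed.

Variables (v : 'rV[R]_n).
Let p0 := dotv (emb R (al s)) v.
Let q0 := dotv (emb R (al s')) v.
Let As := emb R (av s).
Let As' := emb R (av s').

Lemma rA_st_s (x y : R) :
  rA al av s (v + x *: As + y *: As') = v + (- x - p0 - b'%:~R * y) *: As + y *: As'.
Proof.
rewrite /rA !dotvDr !dotvZr /As /As' !dotv_emb !hA (a_ii GCM) -/p0.
apply/rowP => k; rewrite !mxE /b'; ring.
Qed.
Lemma rA_st_s' (x y : R) :
  rA al av s' (v + x *: As + y *: As') = v + x *: As + (- y - q0 - c'%:~R * x) *: As'.
Proof.
rewrite /rA !dotvDr !dotvZr /As /As' !dotv_emb !hA (a_ii GCM) -/q0.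
apply/rowP => k; rewrite !mxE /c'; ring.
Qed.


Lemma actA_alt k b p :
  actA al av (alt k (if b then s' else s) (if b then s else s')) (v + p.1 *: As + p.2 *: As')
  = v + (GA0 b' c' p0 q0 k b p).1 *: As + (GA0 b' c' p0 q0 k b p).2 *: As'.
Proof.
elim: k b p => [|k IH] b p //=.
rewrite -cats1 actA_cat /=.
case: b => /=.
- by rewrite rA_st_s' (IH false (p.1, - p.2 - q0 - c'%:~R * p.1)).
- by rewrite rA_st_s (IH true (- p.1 - p0 - b'%:~R * p.2, p.2)).
Qed.

End Dihedral.

Section D.
Variables (R : realFieldType) (I : finType) (n : nat) (a : I -> I -> int)
  (al av : I -> 'rV[int]_n).
Hypothesis GCM : is_GCM a.
Hypothesis hA : forall i j, dotv (al j) (av i) = a i j.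
Variables (s s' : I).
Hypothesis ss' : s != s'.

Local Notation eqW := (eqW R al av).
Local Notation red := (red R al av).

Lemma braid m : fin_ok (a s' s) (a s s') m -> eqW (alt m s s') (alt m s' s).
Proof.
case=> _ [_ Hbr] v.
have E : v = v + (0:R) *: emb R (av s) + (0:R) *: emb R (av s') by rewrite !scale0r !addr0.
rewrite [in LHS]E [in RHS]E.
have := actA_alt GCM hA s s' v m false (0,0).
have := actA_alt GCM hA s s' v m true (0,0).
rewrite /= => -> ->.
by rewrite Hbr.
Qed.

Lemma red_alt u : all (fun z => (z == s) || (z == s')) u -> red u ->
  u = [::] \/ exists k, u = alt k.+1 s s' \/ u = alt k.+1 s' s.
Proof.
elim/last_ind: u => [|u z IH]; first by left.
rewrite all_rcons => /andP [Hz Hu] Hr.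
have Hr' := red_rcons Hr.
right; move: Hr; case: (IH Hu Hr') => [->|[k [->|->]]] Hr.
- by case/orP: Hz => /eqP ->; exists 0; [left|right].
- case/orP: Hz => /eqP Ez; subst z.
  + exfalso; have := Hr (alt k s' s) (eqW_sym (eqW_dup GCM hA _ _)).
    by rewrite !size_rcons size_alt; lia.
  + by exists k.+1; right.
- case/orP: Hz => /eqP Ez; subst z.
  + by exists k.+1; left.
  + exfalso; have := Hr (alt k s s') (eqW_sym (eqW_dup GCM hA _ _)).
    by rewrite !size_rcons size_alt; lia.
Qed.

Lemma braid_contra m K : fin_ok (a s' s) (a s s') m -> (m <= K)%N ->
  (forall t, eqW t (rcons (alt K s' s) s) -> (K <= size t)%N) -> False.
Proof.
move=> Hm HK Hs.
have Hbr := braid Hm.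
case: Hm => Hm0 _.
move: (subnK HK) => EK.
case: m Hm0 HK EK Hbr => // m' _ HK EK Hbr.
set j := (K - m'.+1)%N in EK.
set z1 := (if odd m'.+1 then s else s').
set z2 := (if odd m'.+1 then s' else s).
set w := (if odd m'.+1 then s' else s).
have E1 : rcons (alt K s' s) s = (alt j z1 z2 ++ [:: w]) ++ alt m'.+1 s s'.
  by rewrite -EK alt_split rcons_cat -catA cat1s -alt_S.
have E2 : alt m'.+1 s' s = (if odd m' then s else s') :: alt m' s' s by rewrite alt_S.
have Hw : (if odd m' then s else s') = w by rewrite /w /=; case: (odd m').
have Heq : eqW (alt j z1 z2 ++ alt m' s' s) (rcons (alt K s' s) s).
  rewrite E1; apply: eqW_sym; apply: eqW_trans (eqW_catl _ Hbr) _.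
  rewrite E2 Hw -catA /=.
  have := eqW_ii GCM hA (alt j z1 z2) w (alt m' s' s).
  by rewrite /=.
have := Hs _ Heq; rewrite size_cat !size_alt.
rewrite -EK; lia.
Qed.

Lemma dihedral u : all (fun z => (z == s) || (z == s')) u -> red u ->
  (forall t, eqW t (rcons u s) -> (size u <= size t)%N) ->
  exists x y : int, 0 <= x /\ 0 <= y /\ actY al av u (av s) = x *: av s + y *: av s'.
Proof.
move=> Hu Hr Hs.
case: (red_alt Hu Hr) => [->|[k [Hk|Hk]]].
- by exists 1, 0; rewrite scale1r scale0r addr0.
- exfalso; subst u.
  have := Hs (alt k s' s) (eqW_sym (eqW_dup GCM hA _ _)).
  by rewrite !size_alt ltnn.
- subst u.
  have := actY_alt GCM hA s s' k.+1 true (1,0).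
  rewrite /= scale1r scale0r addr0 => ->.
  set g := G0 _ _ _ _ _.
  have hb : a s' s <= 0 by case: GCM => _ [H _]; apply: H; rewrite eq_sym.
  have hc : a s s' <= 0 by case: GCM => _ [H _]; apply: H.
  have hbc : (a s' s = 0 <-> a s s' = 0) by case: GCM => _ [_ H]; apply: H.
  have [H4|H4] := lerP 4 (a s' s * a s s').
  + have HI : Inv (a s' s) (a s s') true (1,0) by rewrite /Inv /=; lia.
    have [P1 P2] := G0_pos_inf k.+1 hb hc H4 HI.
    by exists g.1, g.2.
  + have [m Hm] := fin_data hb hc hbc H4.
    have [Hlt|Hge] := ltnP k.+1 m.
    * case: Hm => _ [Hpos _]; have [P1 P2] := Hpos _ Hlt.
      by exists g.1, g.2.
    * exfalso; apply: (braid_contra Hm Hge) => t Ht.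
      by have := Hs t Ht; rewrite size_alt.
Qed.

End D.

Section H.
Variables (R : realFieldType) (I : finType) (n : nat) (a : I -> I -> int)
  (al av : I -> 'rV[int]_n).
Hypothesis GCM : is_GCM a.
Hypothesis hA : forall i j, dotv (al j) (av i) = a i j.

Local Notation eqW := (eqW R al av).
Local Notation red := (red R al av).

Definition Qp (y : 'rV[int]_n) := exists c : I -> int, (forall i, 0 <= c i) /\ y = \sum_i c i *: av i.

Lemma Qp_add y z : Qp y -> Qp z -> Qp (y + z).
Proof.
move=> [c [Hc ->]] [d [Hd ->]]; exists (fun i => c i + d i); split.
  by move=> i; apply: addr_ge0.
by rewrite -big_split; apply: eq_bigr => i _; rewrite scalerDl.
Qed.
Lemma Qp_scale x y : 0 <= x -> Qp y -> Qp (x *: y).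
Proof.
move=> Hx [c [Hc ->]]; exists (fun i => x * c i); split.
  by move=> i; apply: mulr_ge0.
by rewrite scaler_sumr; apply: eq_bigr => i _; rewrite scalerA.
Qed.
Lemma Qp_av i : Qp (av i).
Proof.
exists (fun j => (j == i)%:R); split; first by move=> j; case: (j == i).
rewrite (bigD1 i) //= eqxx scale1r big1 ?addr0 // => j /negbTE ->; by rewrite scale0r.
Qed.
Lemma Qp0 : Qp 0.
Proof. exists (fun _ => 0); split => // ; by rewrite big1 // => i _; rewrite scale0r. Qed.

Lemma posroot K : forall w s, (size w <= K)%N -> red w ->
  (forall t, eqW t (rcons w s) -> (size w <= size t)%N) -> Qp (actY al av w (av s)).
Proof.
elim: K => [|K IH] w s.
  by rewrite leqn0 => /nilP -> _ _; apply: Qp_av.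
case/lastP: w => [|w0 s'] Hw Hr Hs; first by apply: Qp_av.
have Hss' : s != s'.
  apply/eqP => E; subst s'.
  have := Hs w0 (eqW_sym (eqW_dup GCM hA _ _)); rewrite size_rcons; lia.
set w := rcons w0 s' in Hw Hr Hs *.
have Ew : w = rcons w0 s' by [].
clearbody w.
suff inner : forall j (v u : seq I), size v = j -> all (fun z => (z == s) || (z == s')) u ->
    eqW (v ++ u) w -> (size v + size u <= size w)%N -> Qp (actY al av w (av s)).
  apply: (inner _ w0 [:: s'] erefl); first by rewrite /= eqxx orbT.
    by rewrite cats1 Ew.
  by rewrite Ew size_rcons addn1.
elim/ltn_ind => j IHj v u Hj Hu Hvu Hsz.
have Hsz' : (size v + size u = size w)%N.
  apply/eqP; rewrite eqn_leq Hsz /=; rewrite -size_cat; exact: Hr _ Hvu.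
have Hredv : red v.
  move=> t Ht; have : eqW (t ++ u) w by apply: eqW_trans (eqW_catr _ Ht) Hvu.
  move/Hr; rewrite size_cat; lia.
have Hredu : red u.
  move=> t Ht; have : eqW (v ++ t) w by apply: eqW_trans (eqW_catl _ Ht) Hvu.
  move/Hr; rewrite size_cat; lia.
have step : forall z : I, (z == s) || (z == s') ->
    (exists t, eqW t (rcons v z) /\ (size t < size v)%N) -> Qp (actY al av w (av s)).
  move=> z Hz [t [Ht Hlt]].
  apply: (IHj (size t) _ t (z :: u) (erefl _)); first by rewrite -Hj.
  - by rewrite /= Hz Hu.
  - apply: eqW_trans _ Hvu.
    have -> : t ++ z :: u = (t ++ [:: z]) ++ u by rewrite -catA.
    apply: eqW_catr; apply: eqW_trans (eqW_catr _ Ht) _.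
    rewrite cats1; exact: eqW_dup GCM hA _ _.
  - rewrite /=; lia.
case: (classic (exists t, eqW t (rcons v s) /\ (size t < size v)%N)) => [Ex|Nx].
  by apply: step Ex; rewrite eqxx.
case: (classic (exists t, eqW t (rcons v s') /\ (size t < size v)%N)) => [Ex|Nx'].
  by apply: step Ex; rewrite eqxx orbT.
have Hv : forall z t, ~ (exists t, eqW t (rcons v z) /\ (size t < size v)%N) ->
    eqW t (rcons v z) -> (size v <= size t)%N.
  move=> z t H Ht; rewrite leqNgt; apply/negP => Hlt; apply: H; by exists t.
have Hune : u != [::].
  apply/eqP => Eu; subst u; apply: Nx'; exists w0; split; last first.
    by move: Hsz'; rewrite addn0 Ew size_rcons => ->.
  move: Hvu; rewrite cats0 => Hvu.
  have H1 : eqW (rcons v s') (rcons w s') by rewrite -!cats1; apply: eqW_catr.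
  apply: eqW_sym; apply: eqW_trans H1 _; rewrite Ew; exact: eqW_dup GCM hA _ _.
have Hvlt : (size v <= K)%N.
  move: Hune Hsz' Hw; case: u {Hu Hvu Hsz Hredu IHj} => // z u' _ /=; lia.
have Q1 := IH v s Hvlt Hredv (fun t => Hv s t Nx).
have Q2 := IH v s' Hvlt Hredv (fun t => Hv s' t Nx').
have Hcond : forall t, eqW t (rcons u s) -> (size u <= size t)%N.
  move=> t Ht; have : eqW (v ++ t) (rcons w s).
    apply: eqW_trans (eqW_catl v Ht) _.
    rewrite -!cats1 catA; exact: eqW_catr.
  move/Hs; rewrite size_cat; lia.
have [x [y [Hx [Hy Exy]]]] := dihedral GCM hA Hss' Hu Hredu Hcond.
rewrite -(eqW_Y (av s) Hvu) actY_cat Exy actYD !actYZ.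
by apply: Qp_add; apply: Qp_scale.
Qed.


Lemma orbit_red lam : Ypp al lam -> forall t, red t -> Qp (lam - actY al av t lam).
Proof.
move=> Hl; elim/last_ind => [|t i IH] Hr.
  by rewrite /= subrr; apply: Qp0.
have Hr' := red_rcons Hr.
rewrite -cats1 actY_cat /= /rY actYD -scaleNr actYZ.
have -> : forall X Y : 'rV[int]_n, lam - (X + (- dotv (al i) lam) *: Y) = (lam - X) + dotv (al i) lam *: Y.
  by move=> X Y; rewrite scaleNr opprD opprK addrA.
apply: Qp_add; first exact: IH.
apply: Qp_scale; first exact: Hl.
apply: (posroot (leqnn _) Hr') => x Hx.
by have := Hr x Hx; rewrite size_rcons => /ltnW.
Qed.

Lemma orbit_Qp lam s : Ypp al lam -> Qp (lam - actY al av s lam).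
Proof.
move=> Hl; have [t [Ht Hr]] := red_exists R al av s.
rewrite -(eqW_Y lam Ht); exact: orbit_red.
Qed.

End H.

Lemma sum_ev (V : nmodType) (I : finType) (F : I -> V) : \sum_i F i = \sum_(k < #|I|) F (enum_val k).
Proof. rewrite -big_enum_val; apply: eq_bigl => i; by rewrite inE. Qed.

Section Indep.
Variables (I : finType) (n : nat) (av : I -> 'rV[int]_n).
Hypothesis free : free_family av.

Definition Mav : 'M[int]_(#|I|, n) := \matrix_(k, j) av (enum_val k) 0 j.

Lemma freeQ (y : 'rV[rat]_#|I|) : y *m map_mx (fun z : int => z%:~R) Mav = 0 -> y = 0.
Proof.
move=> Hy.
pose D : int := \prod_k denq (y 0 k).
pose c : I -> int := fun i => numq (y 0 (enum_rank i)) *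
   \prod_(k | k != enum_rank i) denq (y 0 k).
have Hc : forall i, (c i)%:~R = y 0 (enum_rank i) * D%:~R :> rat.
  move=> i; rewrite /c /D [in RHS](bigD1 (enum_rank i)) //= !intrM numqE -mulrA.
  done.
have HD : D != 0.
  rewrite /D; apply/prodf_neq0 => k _; by rewrite gt_eqF ?denq_gt0.
have Hsum : \sum_i c i *: av i = 0.
  apply/rowP => j; rewrite summxE mxE; apply: (@intr_inj rat).
  rewrite rmorph_sum rmorph0 /=.
  have := congr1 (fun M : 'rV[rat]_n => M 0 j) Hy; rewrite !mxE => Hy'.
  transitivity (D%:~R * \sum_k y 0 k * (Mav k j)%:~R).
    rewrite mulr_sumr sum_ev; apply: eq_bigr => k _.
    rewrite mxE intrM Hc enum_valK mxE; ring.
  rewrite -[RHS](mulr0 D%:~R); congr (_ * _); apply: etrans _ Hy'.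
  apply: eq_bigr => k _; by rewrite [in RHS]mxE.
apply/rowP => k; rewrite mxE.
have := free Hsum (enum_val k); move/(congr1 (fun z : int => z%:~R : rat)).
rewrite Hc enum_valK rmorph0 => /eqP; rewrite mulf_eq0 => /orP [/eqP //|].
by rewrite intr_eq0 (negbTE HD).
Qed.

Lemma rowfreeQ : row_free (map_mx (fun z : int => z%:~R : rat) Mav).
Proof.
rewrite -kermx_eq0; apply/eqP/row_matrixP => k; rewrite row0; apply: freeQ.
by rewrite -row_mul mulmx_ker row0.
Qed.

Lemma freeR (R : realFieldType) (c : I -> R) :
  \sum_i c i *: emb R (av i) = 0 -> forall i, c i = 0.
Proof.
move=> Hs.
have Hf : row_free (map_mx (fun z : int => z%:~R : R) Mav).
  have -> : map_mx (fun z : int => z%:~R : R) Mav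
      = map_mx ratr (map_mx (fun z : int => z%:~R : rat) Mav).
    by apply/matrixP => i j; rewrite !mxE ratr_int.
  by rewrite /row_free mxrank_map; apply: rowfreeQ.
pose x : 'rV[R]_#|I| := \row_k c (enum_val k).
have Hx : x *m map_mx (fun z : int => z%:~R : R) Mav = 0 *m map_mx (fun z : int => z%:~R : R) Mav.
  rewrite mul0mx; apply/rowP => j; rewrite !mxE.
  have := congr1 (fun M : 'rV[R]_n => M 0 j) Hs; rewrite summxE mxE sum_ev => E; apply: etrans _ E.
  apply: eq_bigr => k _; by rewrite !mxE.
move=> i; have := congr1 (fun M : 'rV[R]_#|I| => M 0 (enum_rank i)) (row_free_inj Hf Hx).
by rewrite !mxE enum_rankK.
Qed.

End Indep.

Section Cvx.
Variables (R : realFieldType) (I : finType) (n : nat) (al av : I -> 'rV[int]_n).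
Variable mu : 'rV[int]_n.

Definition Cv (m : nat) (tot : R) (x : 'rV[R]_n) :=
  exists l : seq (R * seq I), all (fun p => (0 <= p.1) && (size p.2 <= m)%N) l /\
    \sum_(p <- l) p.1 = tot /\ x = \sum_(p <- l) p.1 *: emb R (actY al av p.2 mu).

Lemma Cv_add m t t' x x' : Cv m t x -> Cv m t' x' -> Cv m (t + t') (x + x').
Proof.
move=> [l [H1 [H2 H3]]] [l' [H1' [H2' H3']]]; exists (l ++ l'); split.
  by rewrite all_cat H1 H1'.
by rewrite !big_cat /= H2 H2' H3 H3'.
Qed.

Lemma Cv_scale m c t x : 0 <= c -> Cv m t x -> Cv m (c * t) (c *: x).
Proof.
move=> Hc [l [H1 [H2 H3]]]; exists [seq (c * p.1, p.2) | p <- l]; split.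
  rewrite all_map; apply/allP => p Hp /=; have /andP [Hp1 Hp2] := allP H1 p Hp.
  by rewrite mulr_ge0.
rewrite !big_map -H2 mulr_sumr H3 scaler_sumr; split => //.
by apply: eq_bigr => p _; rewrite scalerA.
Qed.

Lemma Cv_nil m : Cv m 0 0.
Proof. by exists [::]; rewrite !big_nil. Qed.

Lemma Cv_mono m m' t x : (m <= m')%N -> Cv m t x -> Cv m' t x.
Proof.
move=> Hm [l [H1 H2]]; exists l; split => //.
apply/allP => p Hp; have /andP [-> Hp2] := allP H1 p Hp; exact: leq_trans Hp2 Hm.
Qed.

Lemma Cv_rA m i t x : Cv m t x -> Cv m.+1 t (rA al av i x).
Proof.
move=> [l [H1 [H2 H3]]]; exists [seq (p.1, i :: p.2) | p <- l]; split.
  rewrite all_map; apply/allP => p Hp /=; have /andP [Hp1 Hp2] := allP H1 p Hp.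
  by rewrite Hp1.
rewrite !big_map H2 H3; split => //.
elim: l {H1 H2 H3} => [|p l IH]; first by rewrite !big_nil /rA dotv0r scale0r subr0.
by rewrite !big_cons rAD rAZ IH /= rA_emb.
Qed.


Lemma conv_Cv m (S : 'rV[R]_n -> Prop) x : (forall p, S p -> Cv m 1 p) -> conv S x -> Cv m 1 x.
Proof.
move=> HS [k [p [w [Hp [Hw [Hs ->]]]]]]; rewrite -Hs.
apply: (big_rec2 (fun t y => Cv m t y)); first exact: Cv_nil.
move=> j t y _ H; apply: Cv_add => //; have := Cv_scale (Hw j) (HS _ (Hp j)); by rewrite mulr1.
Qed.

Lemma inQv_add y z : inQv av y -> inQv av z -> inQv av (y + z).
Proof.
move=> [c ->] [d ->]; exists (fun i => c i + d i).
by rewrite -big_split; apply: eq_bigr => i _; rewrite scalerDl.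
Qed.

Lemma Rword_prop s y : Rword R al av s (fun z => z = mu) y ->
  inQv av (y - mu) /\ Cv (size s) 1 (emb R y).
Proof.
elim: s y => [|i s IH] y /=.
  move=> ->; split.
    by exists (fun _ => 0); rewrite subrr big1 // => i _; rewrite scale0r.
  exists [:: (1, [::])]; rewrite /= !big_cons !big_nil /= scale1r !addr0; split => //.
  by rewrite ler01.
move=> [Hc [e [q [He [Hq Ey]]]]]; split.
  have [H1 _] := IH e He.
  have -> : y - mu = (e - mu) + q by rewrite Ey; rewrite addrAC.
  exact: inQv_add.
apply: conv_Cv Hc => p [e' [[He'|[e'' [He'' ->]]] ->]].
  have [_ H2] := IH e' He'; apply: Cv_mono H2; exact: leqnSn.
have [_ H2] := IH e'' He''; rewrite -rA_emb; exact: Cv_rA.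
Qed.

End Cvx.

Fixpoint words (I : finType) (L : nat) : seq (seq I) :=
  if L is L'.+1 then [::] :: [seq i :: w | i <- enum I, w <- words I L'] else [:: [::]].

Lemma mem_words (I : finType) L (x : seq I) : (size x <= L)%N -> x \in words I L.
Proof.
elim: L x => [|L IH] [|i x] //= Hx.
rewrite in_cons; apply/orP; right; apply: allpairs_f; first by rewrite mem_enum.
exact: IH.
Qed.

Section Final.
Variables (R : realFieldType) (I : finType) (n : nat) (a : I -> I -> int)
  (al av : I -> 'rV[int]_n).
Hypothesis GCM : is_GCM a.
Hypothesis free : free_family av.
Hypothesis hA : forall i j, dotv (al j) (av i) = a i j.

Lemma actY_rev x y : actY al av (rev x) (actY al av x y) = y.
Proof.
elim: x y => [|i x IH] y //=.
by rewrite rev_cons -cats1 actY_cat /= (rY_inv GCM hA) IH.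
Qed.

Lemma combo (lp : seq (R * seq I)) (H : int) (F : seq I -> 'rV[int]_n) :
  (forall p, p \in lp -> 0 <= p.1 /\ Qp av (F p.2) /\
     (forall c : I -> int, (forall i, 0 <= c i) -> F p.2 = \sum_i c i *: av i -> H + 1 <= \sum_i c i)) ->
  exists D : I -> R, \sum_(p <- lp) p.1 *: emb R (F p.2) = \sum_i D i *: emb R (av i) /\
     (\sum_(p <- lp) p.1) * (H + 1)%:~R <= \sum_i D i.
Proof.
elim: lp => [|p lp IH] Hlp.
  exists (fun _ => 0); rewrite !big_nil mul0r; split.
    by rewrite big1 // => i _; rewrite scale0r.
  by rewrite big1.
have [Hp1 [[c [Hc Ec]] Hb]] := Hlp p (mem_head _ _).
have [D [ED HD]] := IH (fun q Hq => Hlp q (mem_behead (s := p :: lp) Hq)).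
have Hs := Hb c Hc Ec.
exists (fun i => p.1 * (c i)%:~R + D i); split.
  rewrite big_cons ED Ec emb_sum scaler_sumr -big_split; apply: eq_bigr => i _.
  by rewrite embZ scalerA scalerDl.
rewrite big_cons big_split /= -mulr_sumr mulrDl lerD //.
apply: ler_wpM2l => //; rewrite -rmorph_sum /=; by rewrite ler_int.
Qed.

Theorem main_proof (lam nu : 'rV[int]_n) (u : seq I) :
    Ypp al lam ->
    exists l : seq 'rV[int]_n,
      forall mu, in_Worbit al av lam mu -> Rw R al av u mu nu -> mu \in l.
Proof.
move=> Hl.
have [t0 [Ht0 Hr0]] := red_exists R al av u.
set L := size t0.
case: (classic (exists d : I -> int, lam - nu = \sum_i d i *: av i)) => [[d Ed]|Nd]; last first.
  exists [::] => mu [s0 Emu] [s [[Hs1 Hs2] Hw]].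
  exfalso; apply: Nd.
  have [[q Eq] _] := Rword_prop Hw.
  have [c [_ Ec]] := orbit_Qp R GCM hA s0 Hl.
  exists (fun i => c i - q i).
  have -> : lam - nu = (lam - actY al av s0 lam) - (nu - mu) by rewrite Emu; rewrite opprB addrA subrK.
  rewrite Ec Eq -sumrB; apply: eq_bigr => i _; by rewrite scalerBl.
set H := \sum_i d i.
set N := absz H.
exists [seq actY al av (rev x) (lam - \sum_i ((f i : nat)%:Z) *: av i) | x : seq I <- words I L, f : {ffun I -> 'I_N.+1} <- enum {ffun I -> 'I_N.+1}].
move=> mu [s0 Emu] [s [[Hs1 Hs2] Hw]].
have HsL : (size s <= L)%N by apply: Hs2 => v; exact: Ht0.
have [_ [lp [Hlp1 [Hlp2 Hlp3]]]] := Rword_prop Hw.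
pose F := fun x : seq I => lam - actY al av x mu.
have HQp : forall x, Qp av (F x).
  move=> x; rewrite /F Emu -actY_cat. exact: (orbit_Qp R GCM hA (x ++ s0) Hl).
case: (classic (exists p, p \in lp /\ exists c : I -> int, (forall i, 0 <= c i) /\
     F p.2 = \sum_i c i *: av i /\ \sum_i c i <= H)) => [Ex|Nx]; last first.
  exfalso.
  have Hb : forall p, p \in lp -> 0 <= p.1 /\ Qp av (F p.2) /\
     (forall c : I -> int, (forall i, 0 <= c i) -> F p.2 = \sum_i c i *: av i -> H + 1 <= \sum_i c i).
    move=> p Hp; have /andP [Hp1 _] := allP Hlp1 p Hp; split => //; split => // c Hc Ec.
    rewrite lezD1 ltNge; apply/negP => Hle; apply: Nx; exists p; split => //; by exists c.
  have [D [ED HD]] := combo Hb.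
  have E1 : \sum_(p <- lp) p.1 *: emb R (F p.2) = emb R lam - emb R nu.
    rewrite Hlp3 /F; under eq_bigr do rewrite embB scalerBr.
    by rewrite sumrB -scaler_suml Hlp2 scale1r.
  have E2 : emb R lam - emb R nu = \sum_i (d i)%:~R *: emb R (av i).
    by rewrite -embB Ed emb_sum; apply: eq_bigr => i _; rewrite embZ.
  have HDd : forall i, D i - (d i)%:~R = 0.
    apply: (freeR free (c := fun i => D i - (d i)%:~R)).
    under eq_bigr do rewrite scalerBl.
    by rewrite sumrB -ED E1 E2 subrr.
  move: HD; rewrite Hlp2 mul1r.
  have -> : \sum_i D i = (H%:~R : R).
    rewrite /H rmorph_sum /=; apply: eq_bigr => i _; by apply/eqP; rewrite -subr_eq0 HDd.
  rewrite ler_int; lia.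
case: Ex => p [Hp [c [Hc [Ec Hcs]]]].
have /andP [_ HpL] := allP Hlp1 p Hp.
have HcN : forall i, (absz (c i) <= N)%N.
  move=> i; have : c i <= H.
    rewrite (bigD1 i) //= in Hcs; apply: le_trans Hcs; rewrite lerDl.
    by apply: sumr_ge0 => j _; apply: Hc.
  have := Hc i; rewrite /N; lia.
pose f := [ffun i => (inord (absz (c i)) : 'I_N.+1)].
have Hf : forall i, ((f i : nat)%:Z) = c i.
  move=> i; rewrite ffunE inordK; last by rewrite ltnS.
  by rewrite gez0_abs //; apply: Hc.
have -> : mu = actY al av (rev p.2) (lam - \sum_i ((f i : nat)%:Z) *: av i).
  under eq_bigr do rewrite Hf.
  by rewrite -Ec /F opprB addrC subrK actY_rev.
apply: allpairs_f; last by rewrite mem_enum.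
apply: mem_words; exact: leq_trans HpL HsL.
Qed.

End Final.

Unset Implicit Arguments.
Set Strict Implicit.

Theorem mainTheorem10 (R : realFieldType) (I : finType) (n : nat)
    (a : I -> I -> int) (al av : I -> 'rV[int]_n) :
  is_GCM a ->
  free_family av ->
  (forall i j, dotv (al j) (av i) = a i j) ->
  forall (lam nu : 'rV[int]_n) (u : seq I),
    Ypp al lam ->
    Yp R al av nu ->
    exists l : seq 'rV[int]_n,
      forall mu, in_Worbit al av lam mu -> Rw R al av u mu nu -> mu \in l.
Proof.
move=> GCM free hA lam nu u Hl _.
exact: (main_proof R GCM free hA nu u Hl).
Qed.
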